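(* Let $b\ge2$, $n\ge1$ be integers, $\mathcal D=\{d,\dots,d+b-1\}$ a set of consecutive integers containing $0$, $s$ the minimal element and $m$ the size of $\Omega_n(b,\mathcal D)$, and $l=d/(b-1)$. Let $p=1/\{(n-1)(-l)\}$ if $(n-1)l\notin\mathbb Z$ and $p=1$ if $(n-1)l\in\mathbb Z$, where $\{x\}=x-\lfloor x\rfloor$. Then $(b-1)/p$ is a positive integer and for $0\le i,j\le m-1$, $$\tilde p_{i,j}=\frac{1}{b^n}\sum_{r=0}^{j}(-1)^r\binom{n+1}{r}\binom{n+b(j-r)+\frac{b-1}{p}-i}{n},$$ where $\binom{N}{n}=0$ for integers $0\le N<n$.
   Context: Carries process over $(b,\mathcal D)$: let $\{X_{k,i}\}_{1\le k\le n,\ i\ge 0}$ be independent random variables, each uniformly distributed on $\mathcal D$. Set $C_0=0$; for $i\ge 0$ let $A_i$ be the unique element of $\mathcal D$ with $A_i\equiv C_i+X_{1,i}+\dots+X_{n,i}\pmod b$, and set $C_{i+1}=(C_i+X_{1,i}+\dots+X_{n,i}-A_i)/b$. The state space $\Omega_n(b,\mathcal D)$ is the set of integers $c$ with $\Pr(C_i=c)>0$ for some $i\ge0$; it is a set of consecutive integers. $\tilde p_{i,j}=\Pr(C_{t+1}=j+s\mid C_t=i+s)$. *)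

(* Defs.v *)
From HB Require Import structures.
From mathcomp Require Import all_boot all_order all_algebra.
Set Implicit Arguments. Unset Strict Implicit. Unset Printing Implicit Defensive.
Import Order.TTheory GRing.Theory Num.Theory.
Local Open Scope ring_scope.

(* The digit set D = {d, ..., d+b-1}; a digit vector (X_1,...,X_n) in D^n is
   encoded as x : {ffun 'I_n -> 'I_b}, with X_k = d + x k.  Uniform
   independent digits = uniform x. *)
Definition digsum (b n : nat) (d : int) (x : {ffun 'I_n -> 'I_b}) : int :=
  \sum_(k < n) (d + (nat_of_ord (x k))%:Z).

Definition digitA (b : nat) (d c S : int) : int := d + ((c + S - d) %% b%:Z)%Z.

Definition carry (b : nat) (d c S : int) : int := ((c + S - digitA b d c S) %/ b%:Z)%Z.

(* Support of the carries process: reach k c  <->  Pr(C_k = c) > 0. *)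
Inductive reach (b n : nat) (d : int) : nat -> int -> Prop :=
| reach0 : reach b n d 0 0
| reachS k c (x : {ffun 'I_n -> 'I_b}) :
    reach b n d k c -> reach b n d k.+1 (carry b d c (digsum d x)).

Definition inOmega (b n : nat) (d c : int) : Prop := exists k, reach b n d k c.

Definition trans (b n : nat) (d c c' : int) : rat :=
  (#|[set x : {ffun 'I_n -> 'I_b} | carry b d c (digsum d x) == c']|)%:R
  / (b ^ n)%:R.

Definition fracpart (x : rat) : rat := x - (Num.floor x)%:~R.

(* binomial C(N, n) for an integer upper index N >= 0 (0 if N < 0, a case
   that never arises in the statement). *)
Definition binz (N : int) (n : nat) : nat :=
  if (0 <= N)%R then 'C(`|N|%N, n) else 0%N.

(* Main.v *)
Require Import Defs.
From HB Require Import structures.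
From mathcomp Require Import all_boot all_order all_algebra.
From mathcomp Require Import zify ring lra.
Import Order.TTheory GRing.Theory Num.Theory.
Local Open Scope ring_scope.

Lemma binz_neg N k : N < k%:Z -> binz N k = 0%N.
Proof.
rewrite /binz; case: ifP => // h0 hk; rewrite bin_small //.
by move: h0 hk; case: N => // N _ /=; rewrite ltz_nat.
Qed.

Lemma binzS N k : binz (N + 1) k.+1 = (binz N k.+1 + binz N k)%N.
Proof.
rewrite /binz; case: N => [N|N] /=.
  by rewrite addn1 binS.
by case: N => [|N].
Qed.

Lemma binz0 N : binz N 0 = nat_of_bool (0 <= N).
Proof. by rewrite /binz; case: ifP => _; rewrite ?bin0. Qed.

Lemma tele_binz (Z : int) k a :
  \sum_(t < a) (binz (Z - t%:Z) k)%:R =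
  (binz (Z + 1) k.+1)%:R - (binz (Z + 1 - a%:Z) k.+1)%:R :> rat.
Proof.
elim: a => [|a IH]; first by rewrite big_ord0 subr0 subrr.
rewrite big_ord_recr /= IH.
have -> : Z + 1 - a%:Z = (Z - a%:Z) + 1 by ring.
rewrite [binz (Z - a%:Z + 1) _]binzS natrD.
have -> : Z + 1 - a.+1%:Z = Z - a%:Z by rewrite -addn1 PoszD; ring.
ring.
Qed.


Definition K (b n : nat) (Y : int) : rat :=
  \sum_(r < n.+2) (-1) ^+ r * ('C(n.+1, r))%:R * (binz (Y - (r * b)%:Z + n%:Z) n)%:R.

Lemma K_rec b n Y : \sum_(t < b) K b n (Y - t%:Z) = K b n.+1 Y.
Proof.
rewrite /K exchange_big /=.
set h := fun r : nat => (binz (Y - (r * b)%:Z + n.+1%:Z) n.+1)%:R : rat.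
set c := fun r : nat => (-1) ^+ r * ('C(n.+1, r))%:R : rat.
transitivity (\sum_(r < n.+2) c r * (h r - h r.+1)).
  apply: eq_bigr => r _; rewrite -mulr_sumr /c; congr (_ * _).
  have E : forall t : nat, Y - t%:Z - (r * b)%:Z + n%:Z = (Y - (r * b)%:Z + n%:Z) - t%:Z by move=> t; ring.
  under eq_bigr => t _ do rewrite E.
  rewrite tele_binz /h; congr (_%:R - _%:R); congr binz.
    by lia.
  by lia.
transitivity (\sum_(r < n.+3) (-1) ^+ r * ('C(n.+2, r))%:R * h r); last first.
  by apply: eq_bigr => r _; rewrite /h.
have E1 : \sum_(r < n.+3) c r * h r = \sum_(r < n.+2) c r * h r.
  by rewrite big_ord_recr /= /c bin_small // mulr0 mul0r addr0.
under [in LHS]eq_bigr => r _ do rewrite mulrBr.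
rewrite sumrB -E1 big_ord_recl [in RHS]big_ord_recl /=.
have bE : forall i, bump 0 i = i.+1 by [].
under [in RHS]eq_bigr => r _ do rewrite bE binS natrD mulrDr mulrDl.
under [in LHS]eq_bigr => r _ do rewrite bE.
rewrite big_split /= !addrA /c expr0 mul1r bin0 mul1r.
congr (_ + _).
rewrite -sumrN; apply: eq_bigr => r _; rewrite exprS; ring.
Qed.


Definition fcons (T : Type) n (t : T) (y : {ffun 'I_n -> T}) : {ffun 'I_n.+1 -> T} :=
  [ffun i => if unlift ord0 i is Some j then y j else t].
Definition fsplit (T : Type) n (x : {ffun 'I_n.+1 -> T}) : T * {ffun 'I_n -> T} :=
  (x ord0, [ffun j => x (lift ord0 j)]).

Arguments fcons {T n}.
Arguments fsplit {T n}.
Lemma fconsK (T : Type) n : cancel (fun p : T * {ffun 'I_n -> T} => fcons p.1 p.2) (@fsplit T n).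
Proof.
case=> t y; rewrite /fsplit /fcons /= ffunE unlift_none; congr pair.
by apply/ffunP => j; rewrite !ffunE liftK.
Qed.

Lemma fsplitK (T : Type) n : cancel (@fsplit T n) (fun p => fcons p.1 p.2).
Proof.
move=> x; apply/ffunP => i; rewrite /fsplit /fcons /= ffunE.
by case: unliftP => [j ->|->]; rewrite ?ffunE.
Qed.

Lemma sum_ffunS (T : finType) n (F : {ffun 'I_n.+1 -> T} -> nat) :
  (\sum_x F x = \sum_(t : T) \sum_(y : {ffun 'I_n -> T}) F (fcons t y))%N.
Proof.
rewrite pair_big /=.
rewrite (reindex (fun p : T * {ffun 'I_n -> T} => fcons p.1 p.2)) //=.
apply: onW_bij; exact: (Bijective (@fconsK T n) (@fsplitK T n)).
Qed.

Definition sumx {b n} (x : {ffun 'I_n -> 'I_b}) : nat := (\sum_(k < n) (x k : nat))%N.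

Lemma sumx_cons b n t (y : {ffun 'I_n -> 'I_b}) : sumx (fcons t y) = (t + sumx y)%N.
Proof.
rewrite /sumx big_ord_recl /fcons ffunE unlift_none; congr addn.
by apply: eq_bigr => j _; rewrite ffunE liftK.
Qed.

Definition W b n (Y : int) : nat :=
  (\sum_(x : {ffun 'I_n -> 'I_b})
     nat_of_bool ((Y - b%:Z < (sumx x)%:Z)%R && ((sumx x)%:Z <= Y)%R))%N.

Lemma W_rec b n Y : W b n.+1 Y = (\sum_(t < b) W b n (Y - t%:Z))%N.
Proof.
rewrite /W sum_ffunS; apply: eq_bigr => t _; apply: eq_bigr => y _.
rewrite sumx_cons; congr nat_of_bool; apply/idP/idP; lia.
Qed.

Lemma W_K b n Y : (W b n Y)%:R = K b n Y.
Proof.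
elim: n Y => [|n IH] Y.
  rewrite /W /K.
  have H0 : forall x : {ffun 'I_0 -> 'I_b}, sumx x = 0%N.
    by move=> x; rewrite /sumx big_ord0.
  under eq_bigr => x _ do rewrite H0.
  rewrite sum_nat_const card_ffun !card_ord expn0 mul1n.
  rewrite !big_ord_recl big_ord0 /= !binz0 /= expr0 expr1 bin0 bin1 !mul1r addr0.
  rewrite mul0n subr0 addr0 (_ : (bump 0 0 * b = b)%N); last by rewrite /bump /= mul1n.
  rewrite addr0 mulN1r ?mulr1 ?mul1r.
  have [h1|h1] := boolP (0 <= Y)%R; have [h2|h2] := boolP (0 <= Y - b%:Z)%R; rewrite /= ?andbT ?andbF.
  - by rewrite ltNge h2 /=; lra.
  - by rewrite ltNge h2 /=; lra.
  - by exfalso; lia.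
  - by rewrite /=; lra.
rewrite W_rec natr_sum -K_rec; apply: eq_bigr => t _; exact: IH.
Qed.


Lemma carryE b d c S : (0 < b)%N -> carry b d c S = ((c + S - d) %/ b%:Z)%Z.
Proof.
move=> hb; rewrite /carry /digitA.
have bn0 : b%:Z != 0 by rewrite eqz_nat -lt0n.
have -> : c + S - (d + ((c + S - d) %% b%:Z)%Z) = ((c + S - d) %/ b%:Z)%Z * b%:Z.
  set z := c + S - d.
  have h := divz_eq z b%:Z.
  transitivity (z - (z %% b%:Z)%Z); first by rewrite /z; ring.
  by rewrite {1}h; ring.
by rewrite mulzK.
Qed.

Lemma digsumE b n d (x : {ffun 'I_n -> 'I_b}) : digsum d x = d *+ n + (sumx x)%:Z.
Proof.
rewrite /digsum big_split /= sumr_const card_ord.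
congr (_ + _).
by rewrite /sumx (big_morph _ PoszD (erefl (Posz 0))).
Qed.

Lemma trans_W b n d c c' : (0 < b)%N ->
  trans b n d c c' = (W b n (c' * b%:Z + b%:Z - 1 - c - (d *+ n - d)))%:R / (b ^ n)%:R.
Proof.
move=> hb; rewrite /trans; congr (_%:R / _).
rewrite -sum1_card big_mkcond /W; apply: eq_bigr => x _.
rewrite inE carryE // digsumE eq_le lez_divRL ?ltz_nat //.
set z := c + (d *+ n + (sumx x)%:Z) - d.
rewrite (_ : ((z %/ b%:Z)%Z <= c') = (z < (c' + 1) * b%:Z)); last by rewrite -ltz_divLR ?ltz_nat // ltzD1.
rewrite /z.
have E : forall u v : bool, u = v -> (if u then 1 else 0)%N = nat_of_bool v by move=> [] [].
apply: E; apply/idP/idP; lia.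
Qed.


Lemma sum_ext (g : nat -> rat) N M : (N <= M)%N -> (forall r, (N <= r)%N -> g r = 0) ->
  \sum_(r < N) g r = \sum_(r < M) g r.
Proof.
move=> hNM H; rewrite (big_ord_widen _ _ hNM) big_mkcond; apply: eq_bigr => r _.
by case: ltnP => // h; rewrite H.
Qed.

Lemma reach_lb b n d (sstar : int) : (1 < b)%N -> (1 <= n)%N -> d <= 0 ->
  sstar * (b%:Z - 1) <= d *+ n - d -> forall k c, reach b n d k c -> sstar <= c.
Proof.
move=> hb hn hd hs k c; elim => [|k' c' x _ IH].
  have : d *+ n - d <= 0.
    have -> : d *+ n - d = d * (n%:Z - 1) by rewrite -mulr_natr natz; ring.
    by apply: mulr_le0_ge0 => //; lia.
  nia.
rewrite carryE; last by lia.
rewrite lez_divRL ?ltz_nat; last by lia.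
rewrite digsumE; lia.
Qed.

Lemma reach_min b n d (sstar : int) : (1 < b)%N ->
  (forall k c, reach b n d k c -> sstar <= c) ->
  d *+ n - d < (sstar + 1) * (b%:Z - 1) -> exists k, reach b n d k sstar.
Proof.
move=> hb lb hup.
have hb0 : (0 < b)%N by lia.
pose x0 : {ffun 'I_n -> 'I_b} := [ffun => Ordinal hb0].
have hx0 : sumx x0 = 0%N by rewrite /sumx big1 // => k _; rewrite ffunE.
suff H : forall N c k, reach b n d k c -> c - sstar <= N%:Z -> exists k', reach b n d k' sstar.
  apply: (H `|0 - sstar|%N 0 0%N (reach0 _ _ _)).
  have := lb _ _ (reach0 b n d); lia.
elim => [|N IH] c k hr hc.
  have := lb _ _ hr => h; have -> : sstar = c by lia.
  by exists k.
have := lb _ _ hr; rewrite le_eqVlt => /orP [/eqP ->|hlt]; first by exists k.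
apply: (IH _ k.+1 (reachS x0 hr)).
have h1 : (sstar + 1) * (b%:Z - 1) <= c * (b%:Z - 1).
  by apply: ler_wpM2r; lia.
have : carry b d c (digsum d x0) < c.
  rewrite carryE // ltz_divLR ?ltz_nat; last by lia.
  rewrite digsumE hx0; lia.
lia.
Qed.


Theorem lemma2 (b n : nat) (d s : int) (m : nat)
  (hb : (2 <= b)%N) (hn : (1 <= n)%N)
  (hD : d <= 0 <= d + b%:Z - 1)
  (hs : inOmega b n d s) (hsmin : forall c, inOmega b n d c -> s <= c)
  (hm : exists l : seq int,
          [/\ uniq l, forall c, c \in l <-> inOmega b n d c & size l = m]) :
  let l : rat := d%:~R / (b%:R - 1) in
  let p : rat := if (n%:R - 1) * l \is a Num.int then 1
                 else 1 / fracpart ((n%:R - 1) * (- l)) in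
  exists q : nat, (0 < q)%N /\ (b%:R - 1) / p = q%:R /\
    forall i j : nat, (i < m)%N -> (j < m)%N ->
      trans b n d (i%:Z + s) (j%:Z + s) =
      1 / (b ^ n)%:R *
      \sum_(r < j.+1) (-1) ^+ r * ('C(n.+1, r))%:R *
         (binz (n%:Z + b%:Z * (j - r)%:Z + q%:Z - i%:Z) n)%:R.
Proof.
move=> l p.
have hd : d <= 0 by case/andP: hD.
set D := d *+ n - d.
set B := b%:Z - 1.
have hB : 0 < B by rewrite /B; lia.
have Bn0 : B != 0 by rewrite gt_eqF.
set sstar := (D %/ B)%Z.
set e := (D %% B)%Z.
have hDe : D = sstar * B + e by exact: divz_eq.
have he0 : 0 <= e by exact: modz_ge0.
have heB : e < B by exact: ltz_pmod.
have lb := @reach_lb b n d sstar hb hn hd.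
have lb' : forall k c, reach b n d k c -> sstar <= c.
  by apply: lb; rewrite -/D hDe; lia.
have [k0 hk0] : exists k, reach b n d k sstar.
  by apply: reach_min => //; rewrite -/D -/B hDe; lia.
have hss : s = sstar.
  have h1 := hsmin _ (ex_intro _ k0 hk0).
  case: hs => k hk; have := lb' _ _ hk; lia.
pose q := `|B - e|%N.
have hq : q%:Z = B - e by rewrite /q gez0_abs //; lia.
exists q; split; first by lia.
split.
  have hBr : B%:~R = b%:R - 1 :> rat by rewrite /B intrB.
  have br0 : (b%:R - 1 : rat) != 0 by rewrite -hBr intr_eq0.
  have hBr0 : (0 : rat) < b%:R - 1 by rewrite -hBr ltr0z.
  have hDr : (n%:R - 1) * d%:~R = sstar%:~R * (b%:R - 1) + e%:~R :> rat.
    rewrite -hBr -intrM -intrD -hDe /D intrB rmorphMn /= -mulr_natr; ring.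
  have hx : (n%:R - 1) * l = sstar%:~R + e%:~R / (b%:R - 1).
    by rewrite /l mulrA hDr; field.
  rewrite /p hx.
  case: ifP => hint.
    have [z hz] := intrP hint.
    have hze : (z - sstar) * B = e.
      apply: (@intr_inj rat); rewrite intrM intrB hBr -hz; field; exact: br0.
    have e0 : e = 0.
      clearbody e sstar B.
      case: (ltrP (z - sstar) 1) => hw.
        have : (z - sstar) * B <= 0 by apply: mulr_le0_ge0; lia.
        lia.
      have : 1 * B <= (z - sstar) * B by apply: ler_wpM2r => //; lia.
      lia.
    by rewrite divr1 -hBr -[q%:R]/((q%:Z)%:~R) hq e0 subr0.
  have en0 : e != 0.
    apply/negP => /eqP e0; move: hint; rewrite e0 (_ : (0:int)%:~R = 0 :> rat) //.
    by rewrite mul0r addr0 intr_int.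
  have het : e%:~R < b%:R - 1 :> rat by rewrite -hBr ltr_int.
  have ht0 : (0 : rat) < e%:~R / (b%:R - 1).
    by apply: divr_gt0 => //; rewrite ltr0z; lia.
  have ht1 : e%:~R / (b%:R - 1) < 1 :> rat by rewrite ltr_pdivrMr // mul1r.
  rewrite mulrN hx /fracpart.
  set t := e%:~R / (b%:R - 1).
  have hf : Num.floor (- (sstar%:~R + t)) = - sstar - 1.
    apply: floor_def; rewrite subrK intrB intrN (_ : 1%:~R = 1 :> rat) //.
    move: ht0 ht1; rewrite -/t => ht0 ht1; apply/andP; split; lra.
  rewrite hf intrB intrN (_ : - (sstar%:~R + t) - (- sstar%:~R - 1%:~R) = 1 - t :> rat); last by ring.
  rewrite div1r invrK -[q%:R]/((q%:Z)%:~R) hq intrB hBr /t; field; exact: br0.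
move=> i j _ _.
rewrite trans_W; last by lia.
rewrite W_K [RHS]mulrC mul1r; congr (_ / _).
set Y := _ - _ - _.
have hY : Y = (j * b)%:Z + q%:Z - i%:Z.
  rewrite /Y hss -/D hq PoszM hDe /B; lia.
rewrite hY /K.
pose g := fun r : nat => (-1) ^+ r * ('C(n.+1, r))%:R *
   (binz ((j * b)%:Z + q%:Z - i%:Z - (r * b)%:Z + n%:Z) n)%:R : rat.
have -> : \sum_(r < j.+1) (-1) ^+ r * ('C(n.+1, r))%:R *
         (binz (n%:Z + b%:Z * (j - r)%:Z + q%:Z - i%:Z) n)%:R = \sum_(r < j.+1) g r.
  apply: eq_bigr => r _; rewrite /g; congr (_ * _%:R); congr binz.
  have hr : (r <= j)%N by rewrite -ltnS.
  have hjr : (j - r)%:Z = j%:Z - r%:Z by lia.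
  rewrite hjr (PoszM j b) (PoszM r b); lia.
rewrite (@sum_ext g n.+2 (n.+2 + j.+1)); last 2 first.
- by lia.
- by move=> r hr; rewrite /g bin_small // mulr0 mul0r.
rewrite [RHS](@sum_ext g j.+1 (n.+2 + j.+1)); last 2 first.
- by lia.
- move=> r hr; rewrite /g binz_neg ?mulr0 //.
  have : (j.+1 * b <= r * b)%N by rewrite leq_mul2r hr orbT.
  rewrite !PoszM; lia.
by [].
Qed.
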